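(* Let $k$ and $N$ be positive integers. The inequality $$k^N \leqslant \binom{Nk-N-1}{N}$$ holds in each of the following cases: (1) $k \geqslant 5$ and $N \geqslant 3$; (2) $k \geqslant 4$ and $N \geqslant 4$; (3) $k \geqslant 3$ and $N \geqslant 9$. *)

(* Defs.v *)
From mathcomp Require Import all_boot.

(* Main.v *)
Require Import Defs.
From mathcomp Require Import all_boot.
From mathcomp Require Import zify.

Lemma ffact_step k N a j : j <= N -> a <= k * N ->
  k.+1 ^ j * a ^_ j <= k ^ j * (a + N) ^_ j.
Proof.
move=> hj ha; elim: j hj => [|j IH] hj; first by rewrite !expn0 !ffactn0.
rewrite !ffactnSr !expnS.
have e1 : k.+1 * k.+1 ^ j * (a ^_ j * (a - j)) = (k.+1 ^ j * a ^_ j) * (k.+1 * (a - j)) by nia.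
have e2 : k * k ^ j * ((a + N) ^_ j * (a + N - j)) = (k ^ j * (a + N) ^_ j) * (k * (a + N - j)) by nia.
rewrite e1 e2; apply: leq_mul; first by apply: IH; lia.
nia.
Qed.

Lemma kstep k N : 0 < N -> 2 <= k -> k ^ N <= 'C(N * k - N - 1, N) ->
  k.+1 ^ N <= 'C(N * k.+1 - N - 1, N).
Proof.
move=> hN hk H.
have -> : N * k.+1 - N - 1 = (N * k - N - 1) + N by nia.
set a := N * k - N - 1.
rewrite -(leq_pmul2r (fact_gt0 N)) bin_ffact.
rewrite -(leq_pmul2r (fact_gt0 N)) bin_ffact in H.
have hk0 : 0 < k by lia.
have hkN : 0 < k ^ N by rewrite expn_gt0 hk0.
rewrite -(leq_pmul2l hkN).
rewrite (_ : k ^ N * (k.+1 ^ N * N`!) = k.+1 ^ N * (k ^ N * N`!)); last by nia.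
have ha : a <= k * N by rewrite /a; lia.
apply: (leq_trans _ (ffact_step k N a N (leqnn N) ha)).
by rewrite leq_mul2l H orbT.
Qed.

Lemma n3 N : 0 < N -> 3 * 'C(N * 3 - N - 1, N) <= 'C(N.+1 * 3 - N.+1 - 1, N.+1).
Proof.
move=> hN.
have -> : N * 3 - N - 1 = (N.*2).-1 by lia.
have -> : N.+1 * 3 - N.+1 - 1 = (N.*2).+1 by lia.
have e1 := mul_bin_down (N.*2) N.
have e2 := mul_bin_diag (N.*2).+1 N.
rewrite /= in e2.
have h : N.*2 - N = N by lia.
rewrite h in e1.
have e3 : 'C(N.*2, N) = 2 * 'C((N.*2).-1, N).
  apply/eqP; rewrite -(eqn_pmul2l hN); apply/eqP; rewrite -e1; nia.
rewrite -(leq_pmul2l (ltn0Sn N)) -e2 e3; nia.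
Qed.

Lemma n4 N : 0 < N -> 4 * 'C(N * 4 - N - 1, N) <= 'C(N.+1 * 4 - N.+1 - 1, N.+1).
Proof.
move=> hN.
have -> : N * 4 - N - 1 = (N * 3).-1 by lia.
have -> : N.+1 * 4 - N.+1 - 1 = (N * 3).+2 by lia.
have e1 := mul_bin_down (N * 3) N.
have e2 := mul_bin_down (N * 3).+1 N.
have e3 := mul_bin_diag (N * 3).+2 N.
rewrite /= in e2 e3.
set c0 := 'C((N * 3).-1, N) in e1 *.
set c1 := 'C(N * 3, N) in e1 e2.
set c2 := 'C((N * 3).+1, N) in e2 e3.
set c3 := 'C((N * 3).+2, N.+1) in e3 *.
have h1 : N * 3 - N = N.*2 by lia.
have h2 : (N * 3).+1 - N = (N.*2).+1 by lia.
rewrite h1 in e1; rewrite h2 in e2.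
have key : (N.+1 * ((N.*2).+1 * N.*2)) * c3 = ((N * 3).+2 * ((N * 3).+1 * (N * 3))) * c0.
  transitivity ((N.*2).+1 * N.*2 * (N.+1 * c3)); first by nia.
  rewrite -e3.
  transitivity ((N * 3).+2 * N.*2 * ((N.*2).+1 * c2)); first by nia.
  rewrite -e2.
  transitivity ((N * 3).+2 * (N * 3).+1 * (N.*2 * c1)); first by nia.
  rewrite -e1; nia.
have hP : 0 < N.+1 * ((N.*2).+1 * N.*2) by nia.
rewrite -(leq_pmul2l hP) key; nia.
Qed.

Lemma n5 N : 0 < N -> 5 * 'C(N * 5 - N - 1, N) <= 'C(N.+1 * 5 - N.+1 - 1, N.+1).
Proof.
move=> hN.
have -> : N * 5 - N - 1 = (N * 4).-1 by lia.
have -> : N.+1 * 5 - N.+1 - 1 = (N * 4).+3 by lia.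
have e1 := mul_bin_down (N * 4) N.
have e2 := mul_bin_down (N * 4).+1 N.
have e3 := mul_bin_down (N * 4).+2 N.
have e4 := mul_bin_diag (N * 4).+3 N.
rewrite /= in e2 e3 e4.
set c0 := 'C((N * 4).-1, N) in e1 *.
set c1 := 'C(N * 4, N) in e1 e2.
set c2 := 'C((N * 4).+1, N) in e2 e3.
set c3 := 'C((N * 4).+2, N) in e3 e4.
set c4 := 'C((N * 4).+3, N.+1) in e4 *.
have h1 : N * 4 - N = N * 3 by lia.
have h2 : (N * 4).+1 - N = (N * 3).+1 by lia.
have h3 : (N * 4).+2 - N = (N * 3).+2 by lia.
rewrite h1 in e1; rewrite h2 in e2; rewrite h3 in e3.
have key : (N.+1 * ((N * 3).+2 * ((N * 3).+1 * (N * 3)))) * c4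
   = ((N * 4).+3 * ((N * 4).+2 * ((N * 4).+1 * (N * 4)))) * c0.
  transitivity ((N * 3).+2 * (N * 3).+1 * (N * 3) * (N.+1 * c4)); first by nia.
  rewrite -e4.
  transitivity ((N * 4).+3 * (N * 3).+1 * (N * 3) * ((N * 3).+2 * c3)); first by nia.
  rewrite -e3.
  transitivity ((N * 4).+3 * (N * 4).+2 * (N * 3) * ((N * 3).+1 * c2)); first by nia.
  rewrite -e2.
  transitivity ((N * 4).+3 * (N * 4).+2 * (N * 4).+1 * ((N * 3) * c1)); first by nia.
  rewrite -e1; nia.
have hP : 0 < N.+1 * ((N * 3).+2 * ((N * 3).+1 * (N * 3))) by rewrite !muln_gt0 /=; lia.
rewrite -(leq_pmul2l hP) key mulnA leq_mul2r; apply/orP; right.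
have hNN : N <= N * N by rewrite leq_pmulr.
lia.
Qed.


Lemma Nind k N0 d : 0 < N0 -> k ^ N0 <= 'C(N0 * k - N0 - 1, N0) ->
  (forall N, 0 < N -> k * 'C(N * k - N - 1, N) <= 'C(N.+1 * k - N.+1 - 1, N.+1)) ->
  k ^ (N0 + d) <= 'C((N0 + d) * k - (N0 + d) - 1, N0 + d).
Proof.
move=> h0 hb hs; elim: d => [|d IH]; first by rewrite addn0.
rewrite addnS expnS; apply: leq_trans (hs _ _); last by lia.
by rewrite leq_mul2l IH orbT.
Qed.

Lemma kind k0 d N : 0 < N -> 2 <= k0 -> k0 ^ N <= 'C(N * k0 - N - 1, N) ->
  (k0 + d) ^ N <= 'C(N * (k0 + d) - N - 1, N).
Proof.
move=> hN hk hb; elim: d => [|d IH]; first by rewrite addn0.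
rewrite addnS; apply: kstep => //; lia.
Qed.

Theorem lemma4p4 (k N : nat) (hk : 0 < k) (hN : 0 < N) :
  [|| (5 <= k) && (3 <= N), (4 <= k) && (4 <= N) | (3 <= k) && (9 <= N)] ->
  k ^ N <= 'C(N * k - N - 1, N).
Proof.
have gen : forall k0 N0, 0 < N0 -> 2 <= k0 -> k0 <= k -> N0 <= N ->
  k0 ^ N0 <= 'C(N0 * k0 - N0 - 1, N0) ->
  (forall N, 0 < N -> k0 * 'C(N * k0 - N - 1, N) <= 'C(N.+1 * k0 - N.+1 - 1, N.+1)) ->
  k ^ N <= 'C(N * k - N - 1, N).
  move=> k0 N0 h0 hk0 hkk hNN hb hs.
  have := Nind k0 N0 (N - N0) h0 hb hs; rewrite subnKC // => hbN.
  have := kind k0 (k - k0) N hN hk0 hbN; by rewrite subnKC.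
case/or3P => /andP [h1 h2].
- by apply: (gen 5 3) => //; [apply: n5].
- by apply: (gen 4 4) => //; [apply: n4].
- by apply: (gen 3 9) => //; [apply: n3].
Qed.
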